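(* Let $X=\{x\in\mathbb{R}^n: Cx\le d\}$ be polyhedral, $g:\mathbb{R}^m\to\mathbb{R}$ be $\sigma_g$-strongly convex with $L_g$-Lipschitz gradient, $A\in\mathbb{R}^{m\times n}$ nonzero, $c\in\mathbb{R}^n$, and $f(x)=g(Ax)+c^Tx$. Assume the optimal set $X^*$ of $f^*=\min_{x\in X}f(x)$ is nonempty. Then there exist unique $t^*\in\mathbb{R}^m$, $s^*\in\mathbb{R}$ with $Ax^*=t^*$, $c^Tx^*=s^*$ for all $x^*\in X^*$, and $X^*=\{x: Ax=t^*,\ c^Tx=s^*,\ Cx\le d\}$. Let $\theta>0$ be a Hoffman constant for this polyhedron: $$\|x-[x]_{X^*}\|\le\theta\left\|\begin{pmatrix}Ax-t^*\\ c^Tx-s^*\\ [Cx-d]_+\end{pmatrix}\right\|\qquad\forall x\in\mathbb{R}^n,$$ and let $c_g=\|\nabla g(t^* )\|$. Then $\nabla f$ is Lipschitz with constant $L_f=L_g\|A\|^2$, and for every $M>0$, with $X_M=\{x\in X: f(x)-f^*\le M\}$, $$f(x)-f^*\ge\frac{\kappa_f}{2}\|x-[x]_{X^*}\|^2\quad\forall x\in X_M,\qquad\kappa_f=\frac{\sigma_g}{\theta^2\,(1+M\sigma_g+2c_g^2)}.$$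
   Context: $\|\cdot\|$ denotes the Euclidean norm (spectral norm for matrices), $[u]_S$ the Euclidean projection onto a closed convex set $S$, and $[v]_+$ the componentwise positive part. $g$ is $\sigma_g$-strongly convex means $g(z)\ge g(w)+\langle\nabla g(w),z-w\rangle+\frac{\sigma_g}{2}\|z-w\|^2$ for all $z,w$, with $\sigma_g>0$. *)

(* Defs.v *)
From Stdlib Require Export Reals Lra.
From Stdlib Require Vectors.Fin.
Open Scope R_scope.

Definition vec (n : nat) := Fin.t n -> R.
Definition mat (m n : nat) := Fin.t m -> Fin.t n -> R.

Fixpoint vsum (n : nat) : (Fin.t n -> R) -> R :=
  match n with
  | O => fun _ => 0
  | S k => fun f => f Fin.F1 + vsum k (fun i => f (Fin.FS i))
  end.

Definition dot {n} (u v : vec n) : R := vsum n (fun i => u i * v i).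
Definition norm {n} (u : vec n) : R := sqrt (dot u u).
Definition vadd {n} (u v : vec n) : vec n := fun i => u i + v i.
Definition vsub {n} (u v : vec n) : vec n := fun i => u i - v i.
Definition vpos {n} (u : vec n) : vec n := fun i => Rmax (u i) 0.
Definition veq {n} (u v : vec n) : Prop := forall i, u i = v i.
Definition matvec {m n} (A : mat m n) (x : vec n) : vec m :=
  fun i => dot (A i) x.

Definition is_opnorm {m n} (A : mat m n) (nA : R) : Prop :=
  is_lub (fun r => exists x : vec n, norm x <= 1 /\ r = norm (matvec A x)) nA.

Definition is_grad {n} (h : vec n -> R) (G : vec n) (w : vec n) : Prop :=
  forall eps, 0 < eps -> exists delta, 0 < delta /\
    forall k : vec n, norm k < delta ->
      Rabs (h (vadd w k) - h w - dot G k) <= eps * norm k.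

Definition lipschitz {n} (G : vec n -> vec n) (L : R) : Prop :=
  forall z w, norm (vsub (G z) (G w)) <= L * norm (vsub z w).

Definition strongly_convex {n} (h : vec n -> R) (G : vec n -> vec n) (s : R) : Prop :=
  forall z w, h z >= h w + dot (G w) (vsub z w) + s / 2 * (norm (vsub z w))^2.

Definition in_poly {p n} (C : mat p n) (d : vec p) (x : vec n) : Prop :=
  forall i, matvec C x i <= d i.

Definition fobj {m n} (g : vec m -> R) (A : mat m n) (c : vec n) (x : vec n) : R :=
  g (matvec A x) + dot c x.

Definition is_optimal {p n} (C : mat p n) (d : vec p) (f : vec n -> R) (x : vec n) : Prop :=
  in_poly C d x /\ forall y, in_poly C d y -> f x <= f y.

Definition is_proj {n} (S : vec n -> Prop) (x q : vec n) : Prop :=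
  S q /\ forall y, S y -> norm (vsub x q) <= norm (vsub x y).

(* Main.v *)
Require Import Defs.
From Stdlib Require Import Reals Lra Psatz FunctionalExtensionality.
Open Scope R_scope.

Lemma vsum_lin : forall n (f h : Fin.t n -> R) a b,
  vsum n (fun i => a * f i + b * h i) = a * vsum n f + b * vsum n h.
Proof.
  induction n; intros; simpl. ring.
  rewrite (IHn (fun i => f (Fin.FS i)) (fun i => h (Fin.FS i))). ring.
Qed.

Lemma vsum_ext : forall n (f h : Fin.t n -> R), (forall i, f i = h i) -> vsum n f = vsum n h.
Proof. intros. f_equal. apply functional_extensionality; auto. Qed.

Lemma vsum_add n (f h : Fin.t n -> R) : vsum n (fun i => f i + h i) = vsum n f + vsum n h.
Proof. rewrite <- (Rmult_1_l (vsum n f)), <- (Rmult_1_l (vsum n h)), <- vsum_lin.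
  apply vsum_ext; intros; ring. Qed.

Lemma vsum_scal n (f : Fin.t n -> R) a : vsum n (fun i => a * f i) = a * vsum n f.
Proof. replace (a * vsum n f) with (a * vsum n f + 0 * vsum n f) by ring.
  rewrite <- vsum_lin. apply vsum_ext; intros; ring. Qed.

Lemma vsum_zero : forall n, vsum n (fun _ => 0) = 0.
Proof. induction n; simpl; auto. rewrite IHn; ring. Qed.

Lemma vsum_nonneg : forall n (f : Fin.t n -> R), (forall i, 0 <= f i) -> 0 <= vsum n f.
Proof. induction n; intros; simpl. lra.
  pose proof (H Fin.F1). pose proof (IHn (fun i => f (Fin.FS i)) (fun i => H _)). lra. Qed.

Lemma vsum_term : forall n (f : Fin.t n -> R), (forall i, 0 <= f i) -> forall i, f i <= vsum n f.
Proof. induction n; intros f H i. inversion i.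
  simpl. pattern i; apply Fin.caseS'.
  - pose proof (vsum_nonneg n (fun i => f (Fin.FS i)) (fun i => H _)). lra.
  - intro j. pose proof (H Fin.F1). pose proof (IHn (fun i => f (Fin.FS i)) (fun i => H _) j). lra.
Qed.

Lemma vsum_swap : forall n m (F : Fin.t n -> Fin.t m -> R),
  vsum n (fun i => vsum m (fun j => F i j)) = vsum m (fun j => vsum n (fun i => F i j)).
Proof. induction n; intros; simpl. rewrite vsum_zero; auto.
  rewrite (IHn m (fun i j => F (Fin.FS i) j)). rewrite <- vsum_add. auto. Qed.

Lemma dot_comm {n} (u v : vec n) : dot u v = dot v u.
Proof. unfold dot; apply vsum_ext; intros; ring. Qed.

Lemma dot_vadd_r {n} (u v w : vec n) : dot u (vadd v w) = dot u v + dot u w.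
Proof. unfold dot, vadd. rewrite <- vsum_add. apply vsum_ext; intros; ring. Qed.
Lemma dot_vsub_r {n} (u v w : vec n) : dot u (vsub v w) = dot u v - dot u w.
Proof. unfold dot, vsub. replace (vsum n (fun i => u i * v i) - vsum n (fun i => u i * w i))
  with (1 * vsum n (fun i => u i * v i) + (-1) * vsum n (fun i => u i * w i)) by ring.
  rewrite <- vsum_lin. apply vsum_ext; intros; ring. Qed.
Lemma dot_vadd_l {n} (u v w : vec n) : dot (vadd v w) u = dot v u + dot w u.
Proof. rewrite !(dot_comm _ u). apply dot_vadd_r. Qed.
Lemma dot_vsub_l {n} (u v w : vec n) : dot (vsub v w) u = dot v u - dot w u.
Proof. rewrite !(dot_comm _ u). apply dot_vsub_r. Qed.

Definition scale {n} (a : R) (u : vec n) : vec n := fun i => a * u i.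
Lemma dot_scale_r {n} a (u v : vec n) : dot u (scale a v) = a * dot u v.
Proof. unfold dot, scale. rewrite <- vsum_scal. apply vsum_ext; intros; ring. Qed.
Lemma dot_scale_l {n} a (u v : vec n) : dot (scale a v) u = a * dot v u.
Proof. rewrite !(dot_comm _ u). apply dot_scale_r. Qed.

Lemma dot_self_nonneg {n} (u : vec n) : 0 <= dot u u.
Proof. apply vsum_nonneg. intros; nra. Qed.

Lemma norm_nonneg {n} (u : vec n) : 0 <= norm u.
Proof. apply sqrt_pos. Qed.
Lemma norm_sq {n} (u : vec n) : norm u ^ 2 = dot u u.
Proof. unfold norm. rewrite <- Rsqr_pow2. apply Rsqr_sqrt, dot_self_nonneg. Qed.


Lemma norm_scale {n} a (u : vec n) : norm (scale a u) = Rabs a * norm u.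
Proof. unfold norm. rewrite dot_scale_l, dot_scale_r, <- Rmult_assoc.
  rewrite sqrt_mult_alt by nra. f_equal. rewrite <- sqrt_Rsqr_abs. f_equal. Qed.

Lemma cs_sq {n} (u v : vec n) : (dot u v)^2 <= dot u u * dot v v.
Proof.
  assert (Q : forall l, 0 <= dot u u - 2 * l * dot u v + l^2 * dot v v).
  { intro l. pose proof (dot_self_nonneg (vsub u (scale l v))).
    replace (dot u u - 2 * l * dot u v + l^2 * dot v v)
      with (dot (vsub u (scale l v)) (vsub u (scale l v))); auto.
    rewrite dot_vsub_l, !dot_vsub_r, !dot_scale_l, !dot_scale_r, (dot_comm v u). ring. }
  pose proof (dot_self_nonneg u). pose proof (dot_self_nonneg v).
  destruct (Req_dec (dot v v) 0) as [E|E].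
  - destruct (Req_dec (dot u v) 0) as [E2|E2].
    + rewrite E2, E. nra.
    + specialize (Q ((dot u u + 1) / (2 * dot u v))). rewrite E in Q.
      replace (dot u u - 2 * ((dot u u + 1) / (2 * dot u v)) * dot u v +
        ((dot u u + 1) / (2 * dot u v)) ^ 2 * 0) with (-1) in Q by (field; auto). lra.
  - specialize (Q (dot u v / dot v v)).
    assert (0 < dot v v) by lra.
    assert (0 <= dot u u * dot v v - (dot u v)^2).
    { replace (dot u u * dot v v - (dot u v)^2) with
        (dot v v * (dot u u - 2 * (dot u v / dot v v) * dot u v + (dot u v / dot v v)^2 * dot v v))
        by (field; auto). nra. }
    lra.
Qed.

Lemma cs {n} (u v : vec n) : Rabs (dot u v) <= norm u * norm v.
Proof. unfold norm. rewrite <- sqrt_mult_alt by (apply dot_self_nonneg).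
  rewrite <- sqrt_Rsqr_abs. apply sqrt_le_1_alt. rewrite Rsqr_pow2. apply cs_sq. Qed.

Lemma matvec_vadd {m n} (A : mat m n) x y : matvec A (vadd x y) = vadd (matvec A x) (matvec A y).
Proof. apply functional_extensionality; intro i. unfold matvec, vadd at 2. apply dot_vadd_r. Qed.
Lemma matvec_vsub {m n} (A : mat m n) x y : matvec A (vsub x y) = vsub (matvec A x) (matvec A y).
Proof. apply functional_extensionality; intro i. unfold matvec, vsub at 2. apply dot_vsub_r. Qed.
Lemma matvec_scale {m n} (A : mat m n) a x : matvec A (scale a x) = scale a (matvec A x).
Proof. apply functional_extensionality; intro i. unfold matvec, scale at 2. apply dot_scale_r. Qed.

Definition matT {m n} (A : mat m n) : mat n m := fun j i => A i j.
Lemma dot_matT {m n} (A : mat m n) u k : dot (matvec (matT A) u) k = dot u (matvec A k).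
Proof. unfold dot, matvec, matT, dot.
  transitivity (vsum n (fun j => vsum m (fun i => A i j * u i * k j))).
  - apply vsum_ext; intro j. rewrite Rmult_comm, <- vsum_scal. apply vsum_ext; intros; ring.
  - rewrite vsum_swap. apply vsum_ext; intro i. rewrite <- vsum_scal. apply vsum_ext; intros; ring.
Qed.

Lemma norm_zero {n} : norm (fun _ : Fin.t n => 0) = 0.
Proof. unfold norm, dot. replace (vsum n (fun i => 0 * 0)) with 0. apply sqrt_0.
  symmetry. transitivity (vsum n (fun _ => 0)).
  apply vsum_ext; intros; ring. apply vsum_zero. Qed.

Section Op.
Context {m n : nat} (A : mat m n) (nA : R) (HnA : is_opnorm A nA).

Lemma opn_nonneg : 0 <= nA.
Proof. destruct HnA as [Hub _]. apply Hub. exists (fun _ => 0). split.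
  rewrite norm_zero; lra.
  replace (matvec A (fun _ => 0)) with (fun _ : Fin.t m => 0). rewrite norm_zero; auto.
  apply functional_extensionality; intro i. unfold matvec, dot. symmetry. transitivity (vsum n (fun _ => 0)).
  apply vsum_ext; intros; ring. apply vsum_zero.
Qed.

Lemma opn_bound x : norm (matvec A x) <= nA * norm x.
Proof. destruct HnA as [Hub _]. pose proof opn_nonneg as H0.
  assert (Hs : forall l, 0 <= l -> l * norm x <= 1 -> l * norm (matvec A x) <= nA).
  { intros l Hl Hlx. apply Hub. exists (scale l x). rewrite norm_scale, Rabs_right by lra. split; auto.
    rewrite matvec_scale, norm_scale, Rabs_right by lra. auto. }
  pose proof (norm_nonneg x). pose proof (norm_nonneg (matvec A x)).
  destruct (Req_dec (norm x) 0) as [E|E].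
  - rewrite E. destruct (Req_dec (norm (matvec A x)) 0) as [E2|E2]. lra.
    specialize (Hs ((nA + 1) / norm (matvec A x))).
    rewrite E in Hs. assert (0 < norm (matvec A x)) by lra.
    assert (((nA + 1) / norm (matvec A x)) * norm (matvec A x) <= nA).
    { apply Hs. apply Rlt_le, Rdiv_lt_0_compat; lra. lra. }
    field_simplify in H3; lra.
  - specialize (Hs (1 / norm x)). assert (0 < norm x) by lra.
    assert (1 / norm x * norm (matvec A x) <= nA).
    { apply Hs. apply Rlt_le, Rdiv_lt_0_compat; lra. right; field; lra. }
    apply Rmult_le_reg_l with (1 / norm x). apply Rdiv_lt_0_compat; lra.
    replace (1 / norm x * (nA * norm x)) with nA by (field; lra). auto.
Qed.

Lemma opnT_bound u : norm (matvec (matT A) u) <= nA * norm u.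
Proof. set (r := norm (matvec (matT A) u)).
  assert (r ^ 2 <= nA * norm u * r).
  { unfold r. rewrite norm_sq, dot_matT.
    eapply Rle_trans. apply Rle_abs. eapply Rle_trans. apply cs.
    pose proof (opn_bound (matvec (matT A) u)). pose proof (norm_nonneg u).
    replace (nA * norm u * norm (matvec (matT A) u)) with (norm u * (nA * norm (matvec (matT A) u))) by ring.
    apply Rmult_le_compat_l; auto. }
  pose proof (norm_nonneg (matvec (matT A) u)). fold r in H0.
  pose proof opn_nonneg. pose proof (norm_nonneg u).
  assert (0 <= nA * norm u) by (apply Rmult_le_pos; auto).
  set (K := nA * norm u) in *.
  destruct (Rle_or_lt r K); auto. exfalso.
  assert (K * r < r * r) by (apply Rmult_lt_compat_r; lra). nra.
Qed.
End Op.

Lemma Rabs_def2b x y : Rabs x <= y -> - y <= x /\ x <= y.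
Proof. unfold Rabs; destruct (Rcase_abs x); intros; lra. Qed.

Theorem theorem10 (n m p : nat) (C : mat p n) (d : vec p)
  (g : vec m -> R) (Gg : vec m -> vec m) (sigma_g L_g : R)
  (A : mat m n) (c : vec n) (nA : R) (xs : vec n)
  (Hgrad : forall w, is_grad g (Gg w) w)
  (Hsig : 0 < sigma_g)
  (Hsc : strongly_convex g Gg sigma_g)
  (HL : lipschitz Gg L_g)
  (HA : exists i j, A i j <> 0)
  (HnA : is_opnorm A nA)
  (Hxs : is_optimal C d (fobj g A c) xs) :
  (exists Gf : vec n -> vec n,
      (forall x, is_grad (fobj g A c) (Gf x) x) /\ lipschitz Gf (L_g * nA ^ 2))
  /\
  exists (t : vec m) (s : R),
    (forall x, is_optimal C d (fobj g A c) x -> veq (matvec A x) t /\ dot c x = s) /\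
    (forall (t' : vec m) (s' : R),
       (forall x, is_optimal C d (fobj g A c) x -> veq (matvec A x) t' /\ dot c x = s') ->
       veq t' t /\ s' = s) /\
    (forall x, is_optimal C d (fobj g A c) x <->
       (veq (matvec A x) t /\ dot c x = s /\ in_poly C d x)) /\
    (forall theta, 0 < theta ->
       (forall x q, is_proj (is_optimal C d (fobj g A c)) x q ->
          norm (vsub x q) <= theta * sqrt ((norm (vsub (matvec A x) t)) ^ 2
                                          + (dot c x - s) ^ 2
                                          + (norm (vpos (vsub (matvec C x) d))) ^ 2)) ->
       forall M, 0 < M ->
       let c_g := norm (Gg t) in
       let kappa_f := sigma_g / (theta ^ 2 * (1 + M * sigma_g + 2 * c_g ^ 2)) in
       forall x, in_poly C d x -> fobj g A c x - fobj g A c xs <= M ->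
       forall q, is_proj (is_optimal C d (fobj g A c)) x q ->
         fobj g A c x - fobj g A c xs >= kappa_f / 2 * (norm (vsub x q)) ^ 2).
Proof.
  pose proof (opn_nonneg A nA HnA) as HnA0.
  set (Gf := fun x => vadd (matvec (matT A) (Gg (matvec A x))) c).
  assert (HGf : forall x, is_grad (fobj g A c) (Gf x) x).
  { intros x eps Heps. set (K := nA + 1).
    assert (HK : 0 < K) by (unfold K; lra).
    destruct (Hgrad (matvec A x) (eps / K)) as [del [Hdel H]].
    { apply Rdiv_lt_0_compat; lra. }
    exists (del / K). split. apply Rdiv_lt_0_compat; lra.
    intros k Hk.
    assert (Hak : norm (matvec A k) <= K * norm k).
    { pose proof (opn_bound A nA HnA k). pose proof (norm_nonneg k). unfold K. nra. }
    assert (Hak2 : norm (matvec A k) < del).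
    { apply Rle_lt_trans with (K * norm k); auto.
      apply Rmult_lt_reg_l with (/K). apply Rinv_0_lt_compat; lra.
      replace (/ K * (K * norm k)) with (norm k) by (field; lra).
      replace (/ K * del) with (del / K) by (field; lra). auto. }
    specialize (H _ Hak2).
    unfold fobj, Gf. rewrite matvec_vadd, dot_vadd_l, dot_matT, !dot_vadd_r.
    replace (g (vadd (matvec A x) (matvec A k)) + (dot c x + dot c k) - (g (matvec A x) + dot c x) -
      (dot (Gg (matvec A x)) (matvec A k) + dot c k)) with
      (g (vadd (matvec A x) (matvec A k)) - g (matvec A x) - dot (Gg (matvec A x)) (matvec A k)) by ring.
    eapply Rle_trans. apply H.
    replace (eps * norm k) with (eps / K * (K * norm k)) by (field; lra).
    apply Rmult_le_compat_l; auto. apply Rlt_le, Rdiv_lt_0_compat; lra. }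
  assert (HLg : 0 <= L_g).
  { destruct HA as [i [j _]].
    set (z := fun _ : Fin.t m => 1). set (w := fun _ : Fin.t m => 0).
    specialize (HL z w).
    assert (P : 0 < norm (vsub z w)).
    { unfold norm. apply sqrt_lt_R0. unfold dot.
      pose proof (vsum_term m (fun i => vsub z w i * vsub z w i)) as T.
      assert (forall i, 0 <= vsub z w i * vsub z w i) by (intros; nra).
      specialize (T H i). assert (vsub z w i = 1) by (unfold vsub, z, w; ring).
      cbv beta in T. rewrite H0 in T. lra. }
    pose proof (norm_nonneg (vsub (Gg z) (Gg w))).
    destruct (Rle_or_lt 0 L_g) as [|HLn]; auto.
    assert (L_g * norm (vsub z w) < 0) by (apply Rmult_neg_pos; auto). lra. }
  split.
  { exists Gf. split; auto. intros z w. unfold Gf.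
    replace (vsub (vadd (matvec (matT A) (Gg (matvec A z))) c) (vadd (matvec (matT A) (Gg (matvec A w))) c))
      with (matvec (matT A) (vsub (Gg (matvec A z)) (Gg (matvec A w)))).
    2:{ rewrite matvec_vsub. apply functional_extensionality; intro i; unfold vsub, vadd; ring. }
    eapply Rle_trans. apply (opnT_bound A nA HnA).
    pose proof (HL (matvec A z) (matvec A w)). rewrite <- matvec_vsub in H.
    pose proof (opn_bound A nA HnA (vsub z w)).
    pose proof (norm_nonneg (vsub (matvec A z) (matvec A w))).
    replace (L_g * nA ^ 2 * norm (vsub z w)) with (nA * (L_g * (nA * norm (vsub z w)))) by ring.
    apply Rmult_le_compat_l; auto. rewrite matvec_vsub in H. eapply Rle_trans. apply H.
    apply Rmult_le_compat_l; auto. rewrite <- matvec_vsub; auto. }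
  destruct Hxs as [Hxsp Hxsopt].
  assert (FO : forall y, in_poly C d y -> 0 <= dot (Gf xs) (vsub y xs)).
  { intros y Hy. set (h := vsub y xs). set (D := dot (Gf xs) h).
    destruct (Rle_or_lt 0 D) as [|HD]; auto. exfalso.
    set (N := norm h). pose proof (norm_nonneg h) as HN. fold N in HN.
    set (eps := - D / (2 * (N + 1))).
    assert (Heps : 0 < eps) by (unfold eps; apply Rdiv_lt_0_compat; lra).
    destruct (HGf xs eps Heps) as [del [Hdel H]].
    set (l := Rmin 1 (del / (2 * (N + 1)))).
    assert (Hl0 : 0 < l). { unfold l. apply Rmin_glb_lt. lra. apply Rdiv_lt_0_compat; lra. }
    assert (Hl1 : l <= 1) by apply Rmin_l.
    assert (Hl2 : l <= del / (2 * (N + 1))) by apply Rmin_r.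
    assert (Hnk : norm (scale l h) < del).
    { rewrite norm_scale, Rabs_right by lra. fold N.
      apply Rle_lt_trans with (del / (2 * (N + 1)) * N). apply Rmult_le_compat_r; lra.
      apply Rmult_lt_reg_l with (2 * (N + 1)). lra.
      replace (2 * (N + 1) * (del / (2 * (N + 1)) * N)) with (del * N) by (field; lra). nra. }
    specialize (H _ Hnk).
    assert (Hin : in_poly C d (vadd xs (scale l h))).
    { intro i. rewrite matvec_vadd, matvec_scale. unfold h. rewrite matvec_vsub.
      unfold vadd, scale, vsub. pose proof (Hy i). pose proof (Hxsp i).
      assert (0 <= (1 - l) * (d i - matvec C xs i)) by (apply Rmult_le_pos; lra).
      assert (0 <= l * (d i - matvec C y i)) by (apply Rmult_le_pos; lra). nra. }
    pose proof (Hxsopt _ Hin).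
    rewrite norm_scale, (Rabs_right l) in H by lra. fold N in H.
    rewrite dot_scale_r in H. fold D in H.
    apply Rabs_def2b in H. destruct H as [H1 H2].
    assert (- D * l <= eps * (l * N)) by lra.
    assert (- D <= eps * N).
    { apply Rmult_le_reg_r with l; auto. nra. }
    assert (eps * N < - D).
    { unfold eps. apply Rmult_lt_reg_l with (2 * (N + 1)). lra.
      replace (2 * (N + 1) * (- D / (2 * (N + 1)) * N)) with (- D * N) by (field; lra). nra. }
    lra. }
  set (t := matvec A xs). set (s := dot c xs).
  assert (FOy : forall y, in_poly C d y -> 0 <= dot (Gg t) (vsub (matvec A y) t) + (dot c y - s)).
  { intros y Hy. pose proof (FO y Hy). unfold Gf in H.
    rewrite dot_vadd_l, dot_matT, matvec_vsub, !dot_vsub_r in H. unfold t, s. rewrite dot_vsub_r. lra. }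
  assert (LB : forall y, in_poly C d y ->
    dot (Gg t) (vsub (matvec A y) t) + sigma_g / 2 * norm (vsub (matvec A y) t) ^ 2
      <= g (matvec A y) - g t).
  { intros y Hy. pose proof (Hsc (matvec A y) t). lra. }
  assert (fxs : fobj g A c xs = g t + s) by reflexivity.
  exists t, s.
  assert (Hopt : forall x, is_optimal C d (fobj g A c) x -> matvec A x = t /\ dot c x = s).
  { intros x [Hx Hxo]. pose proof (Hxo xs Hxsp). pose proof (Hxsopt x Hx).
    pose proof (FOy x Hx). pose proof (LB x Hx). rewrite fxs in H, H0. unfold fobj in H, H0.
    assert (E : norm (vsub (matvec A x) t) ^ 2 <= 0).
    { assert (sigma_g / 2 * norm (vsub (matvec A x) t) ^ 2 <= 0) by lra.
      apply Rmult_le_reg_l with (sigma_g / 2). lra. lra. }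
    rewrite norm_sq in E. pose proof (dot_self_nonneg (vsub (matvec A x) t)).
    assert (Ht : matvec A x = t).
    { apply functional_extensionality; intro i.
      pose proof (vsum_term m (fun i => vsub (matvec A x) t i * vsub (matvec A x) t i)) as T.
      assert (forall i, 0 <= vsub (matvec A x) t i * vsub (matvec A x) t i) by (intros; nra).
      specialize (T H4 i). cbv beta in T. unfold dot in E.
      assert (vsub (matvec A x) t i = 0) by nra. unfold vsub in H5. lra. }
    split; auto. rewrite Ht in *. lra. }
  split; [|split; [|split]].
  - intros x Hx. destruct (Hopt x Hx) as [-> ->]. split; auto. intro; auto.
  - intros t' s' H. destruct (H xs (conj Hxsp Hxsopt)) as [H1 H2]. split.
    intro i. symmetry. apply H1. auto.
  - intro x. split.
    + intro Hx. destruct (Hopt x Hx) as [E1 E2]. split. rewrite E1; intro; auto.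
      split; auto. apply Hx.
    + intros [E1 [E2 E3]]. split; auto. intros y Hy.
      assert (matvec A x = t) by (apply functional_extensionality; auto).
      unfold fobj at 1. rewrite H, E2. rewrite <- fxs. auto.
  - intros theta Htheta Hhof M HM c_g kappa_f x Hx HxM q Hq.
    specialize (Hhof x q Hq).
    replace (norm (vpos (vsub (matvec C x) d))) with 0 in Hhof.
    2:{ rewrite <- (@norm_zero p). f_equal. apply functional_extensionality; intro i.
        unfold vpos, vsub. pose proof (Hx i). rewrite Rmax_right; lra. }
    set (D := fobj g A c x - fobj g A c xs) in *.
    set (r := norm (vsub (matvec A x) t)) in *.
    set (e := dot c x - s) in *.
    set (pp := dot (Gg t) (vsub (matvec A x) t)).
    set (N := norm (vsub x q)) in *.
    assert (Hpp : Rabs pp <= c_g * r) by (apply cs).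
    apply Rabs_def2b in Hpp. destruct Hpp as [Hp1 Hp2].
    pose proof (FOy x Hx) as F1. fold pp e in F1.
    pose proof (LB x Hx) as F2. fold pp r in F2.
    assert (ED : D = g (matvec A x) - g t + e) by (unfold D, e; rewrite fxs; unfold fobj; ring).
    assert (Hr : 0 <= r) by apply norm_nonneg.
    assert (Hcg : 0 <= c_g) by apply norm_nonneg.
    assert (HN : 0 <= N) by apply norm_nonneg.
    assert (D1 : sigma_g / 2 * r ^ 2 <= D) by lra.
    assert (D0 : 0 <= D) by nra.
    assert (Eu : e <= D + c_g * r) by nra.
    assert (El : - (c_g * r) <= e) by lra.
    assert (Esq : e ^ 2 <= (D + c_g * r) ^ 2) by nra.
    assert (Rsq : r ^ 2 <= 2 * D / sigma_g).
    { apply Rmult_le_reg_l with (sigma_g / 2). lra.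
      replace (sigma_g / 2 * (2 * D / sigma_g)) with D by (field; lra). auto. }
    assert (Ssum : r ^ 2 + e ^ 2 <= 2 / sigma_g * (1 + M * sigma_g + 2 * c_g ^ 2) * D).
    { assert ((D + c_g * r) ^ 2 <= 2 * D ^ 2 + 2 * c_g ^ 2 * r ^ 2)
        by (pose proof (pow2_ge_0 (D - c_g * r)); nra).
      assert (D ^ 2 <= M * D) by (assert (0 <= D * (M - D)) by (apply Rmult_le_pos; lra); nra).
      assert (c_g ^ 2 * r ^ 2 <= c_g ^ 2 * (2 * D / sigma_g)) by (apply Rmult_le_compat_l; nra).
      replace (2 / sigma_g * (1 + M * sigma_g + 2 * c_g ^ 2) * D) with
        (2 * D / sigma_g + 2 * (M * D) + 2 * (c_g ^ 2 * (2 * D / sigma_g))) by (field; lra).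
      lra. }
    set (S := r ^ 2 + e ^ 2 + 0 ^ 2) in Hhof.
    assert (HS : 0 <= S) by (unfold S; nra).
    assert (N2 : N ^ 2 <= theta ^ 2 * S).
    { replace S with (sqrt S ^ 2) by (rewrite <- Rsqr_pow2; apply Rsqr_sqrt; auto).
      pose proof (sqrt_pos S). replace (theta ^ 2 * sqrt S ^ 2) with ((theta * sqrt S) ^ 2) by ring.
      apply pow_incr; auto. }
    assert (Q : 0 < 1 + M * sigma_g + 2 * c_g ^ 2) by nra.
    unfold kappa_f. apply Rle_ge.
    apply Rle_trans with (sigma_g / (theta ^ 2 * (1 + M * sigma_g + 2 * c_g ^ 2)) / 2 * (theta ^ 2 * S)).
    { apply Rmult_le_compat_l; auto. apply Rlt_le. apply Rdiv_lt_0_compat; try lra.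
      apply Rdiv_lt_0_compat; auto. apply Rmult_lt_0_compat; nra. }
    replace (sigma_g / (theta ^ 2 * (1 + M * sigma_g + 2 * c_g ^ 2)) / 2 * (theta ^ 2 * S))
      with (sigma_g / (2 * (1 + M * sigma_g + 2 * c_g ^ 2)) * S) by (field; split; nra).
    assert (S <= 2 / sigma_g * (1 + M * sigma_g + 2 * c_g ^ 2) * D) by (unfold S; lra).
    apply Rle_trans with (sigma_g / (2 * (1 + M * sigma_g + 2 * c_g ^ 2)) * (2 / sigma_g * (1 + M * sigma_g + 2 * c_g ^ 2) * D)).
    apply Rmult_le_compat_l; auto. apply Rlt_le, Rdiv_lt_0_compat; lra.
    right. field. lra.
Qed.
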